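(* Let $M$ be a gasket automaton satisfying the $\gamma$-isolated condition with $\mathcal P_{\alpha\gamma}\cup\mathcal P_{\beta\gamma}\ne\emptyset$, and let $M'$ be a one-step simplification of $M$. Then $M'$ is a gasket automaton satisfying the $\gamma$-isolated condition.
   Context: $\Sigma=\{1,\dots,N\}$. Triangle automaton: $\alpha,\beta,\gamma$ distinct elements of $\Sigma\cup\{-1,-2,-3\}$; states $S_{uv}$ ($u\ne v\in\{\alpha,\beta,\gamma\}$), $Id$, $Exit$; input alphabet $\Sigma^2$; transition $\delta$ with $\delta(Id,(i,j))=Id$ iff $i=j$; $\delta(Id,(i,j))=S_{uv}\Rightarrow\delta(Id,(j,i))=S_{vu}$; $\delta(S_{uv},(i,j))=S_{uv}$ if $(i,j)=(v,u)$, else $Exit$. $\mathcal P_{uv}=\{(i,j):\delta(Id,(i,j))=S_{uv}\}$; a triangle automaton is determined by $\mathcal P_{\alpha\beta},\mathcal P_{\alpha\gamma},\mathcal P_{\beta\gamma}$. $i\triangleleft_{uv}j$ iff $(i,j)\in\mathcal P_{uv}$ (iff $j\triangleleft_{vu}i$); $j$ is $uv$-minimal if no $i\triangleleft_{uv}j$, $uv$-maximal if no $j\triangleleft_{uv}k$, $uv$-isolated if both. Gasket automaton: (Uniqueness) $i\triangleleft_{uv}j,i\triangleleft_{uv}j'\Rightarrow j=j'$; (Gathering) any two of $a\triangleleft_{\alpha\gamma}c$, $a\triangleleft_{\beta\gamma}b$, $b\triangleleft_{\alpha\beta}c$ imply the third; (Boundary) if $\alpha\in\Sigma$ it is $\alpha\gamma$-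 and $\alpha\beta$-minimal; if $\beta\in\Sigma$ it is $\beta\gamma$- and $\beta\alpha$-minimal; if $\gamma\in\Sigma$ it is $\gamma\alpha$- and $\gamma\beta$-minimal. $\gamma$-isolated condition: $\alpha,\beta,\gamma\in\Sigma$; $(\Sigma,\mathcal P_{\alpha\gamma}\cup\mathcal P_{\beta\gamma})$ has no directed cycle; $\gamma$ is $\alpha\gamma$-, $\beta\gamma$- and $\alpha\beta$-isolated. One-step simplification: $b$ is double-maximal if $\alpha\gamma$- and $\beta\gamma$-maximal. Choose $(\tau,\kappa)\in\mathcal P_{\alpha\gamma}\cup\mathcal P_{\beta\gamma}$ with $\kappa$ double-maximal. If $(\tau,\kappa)\in\mathcal P_{\alpha\gamma}$: if $\kappa$ has no $\alpha\beta$-predecessor, $\mathcal P'_{\alpha\beta}=\mathcal P_{\alpha\beta}$, $\mathcal P'_{\alpha\gamma}=\mathcal P_{\alpha\gamma}\setminus\{(\tau,\kappa)\}$, $\mathcal P'_{\beta\gamma}=\mathcal P_{\beta\gamma}$; if $\lambda\triangleleft_{\alpha\beta}\kappa$, then $\mathcal P'_{\alpha\beta}=\mathcal P_{\alpha\beta}$, $\mathcal P'_{\alpha\gamma}=\mathcal P_{\alpha\gamma}\setminus\{(\tau,\kappa)\}$, $\mathcal P'_{\beta\gamma}=\mathcal P_{\beta\gamma}\setminus\{(\tau,\lambda)\}$. If $(\tau,\kappa)\in\mathcal P_{\beta\gamma}$, the same with the roles of $\alpha$ and $\beta$ interchanged. $M'$ is the triangle automaton determined by $\mathcal P'_{\alpha\beta},\mathcal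 P'_{\alpha\gamma},\mathcal P'_{\beta\gamma}$. *)

(* Defs.v *)
From mathcomp Require Import all_boot.
Set Implicit Arguments. Unset Strict Implicit. Unset Printing Implicit Defensive.

(* The alphabet Sigma = {1,...,N} is represented by 'I_N (relabelled 0..N-1).
   The label set Sigma ∪ {-1,-2,-3} is 'I_N + 'I_3 (inr k stands for -(k+1)). *)
Definition label (N : nat) := ('I_N + 'I_3)%type.

(* The three corners alpha, beta, gamma (abstract names; their actual labels
   in Sigma ∪ {-1,-2,-3} are passed separately). *)
Inductive corner := Ca | Cb | Cc.

(* A triangle automaton is determined by P_ab, P_ag, P_bg. *)
Record TA (N : nat) := MkTA {
  Pab : {set 'I_N * 'I_N};
  Pag : {set 'I_N * 'I_N};
  Pbg : {set 'I_N * 'I_N} }.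

Definition prec N (M : TA N) (u v : corner) (i j : 'I_N) : bool :=
  match u, v with
  | Ca, Cb => (i, j) \in Pab M
  | Cb, Ca => (j, i) \in Pab M
  | Ca, Cc => (i, j) \in Pag M
  | Cc, Ca => (j, i) \in Pag M
  | Cb, Cc => (i, j) \in Pbg M
  | Cc, Cb => (j, i) \in Pbg M
  | _, _ => false
  end.

(* The triple comes from a genuine transition function delta:
   delta(Id,(i,i)) = Id, so no P_uv contains a diagonal pair, and delta is a
   function, so the six sets P_uv are pairwise disjoint. *)
Definition triangle_wf N (M : TA N) : Prop :=
  (forall u v i, ~ prec M u v i i) /\
  (forall u v u' v' i j, prec M u v i j -> prec M u' v' i j -> u = u' /\ v = v').

Definition uv_minimal N (M : TA N) u v (j : 'I_N) := forall i, ~ prec M u v i j.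
Definition uv_maximal N (M : TA N) u v (j : 'I_N) := forall k, ~ prec M u v j k.
Definition uv_isolated N (M : TA N) u v (j : 'I_N) :=
  uv_minimal M u v j /\ uv_maximal M u v j.

Definition gasket N (M : TA N) (al be ga : label N) : Prop :=
  triangle_wf M /\
  (forall u v i j j', prec M u v i j -> prec M u v i j' -> j = j') /\
  (forall a b c,
     (prec M Ca Cc a c -> prec M Cb Cc a b -> prec M Ca Cb b c) /\
     (prec M Ca Cc a c -> prec M Ca Cb b c -> prec M Cb Cc a b) /\
     (prec M Cb Cc a b -> prec M Ca Cb b c -> prec M Ca Cc a c)) /\
  (forall a, al = inl a -> uv_minimal M Ca Cc a /\ uv_minimal M Ca Cb a) /\
  (forall b, be = inl b -> uv_minimal M Cb Cc b /\ uv_minimal M Cb Ca b) /\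
  (forall g, ga = inl g -> uv_minimal M Cc Ca g /\ uv_minimal M Cc Cb g).

Definition no_directed_cycle N (e : rel 'I_N) : Prop :=
  ~ exists (x : 'I_N) (p : seq 'I_N), p != [::] /\ path e x p /\ last x p = x.

Definition gamma_isolated N (M : TA N) (al be ga : label N) : Prop :=
  exists a b g : 'I_N,
    al = inl a /\ be = inl b /\ ga = inl g /\
    no_directed_cycle (fun i j => ((i, j) \in Pag M) || ((i, j) \in Pbg M)) /\
    uv_isolated M Ca Cc g /\ uv_isolated M Cb Cc g /\ uv_isolated M Ca Cb g.

Definition double_maximal N (M : TA N) (b : 'I_N) :=
  uv_maximal M Ca Cc b /\ uv_maximal M Cb Cc b.

Definition one_step_simplification N (M M' : TA N) : Prop :=
  exists tau kappa : 'I_N,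
    double_maximal M kappa /\
    ( ((tau, kappa) \in Pag M /\
       ( ((forall l, ~ prec M Ca Cb l kappa) /\
          M' = MkTA (Pab M) (Pag M :\ (tau, kappa)) (Pbg M))
       \/ (exists l, prec M Ca Cb l kappa /\
          M' = MkTA (Pab M) (Pag M :\ (tau, kappa)) (Pbg M :\ (tau, l)))))
    \/
      ((tau, kappa) \in Pbg M /\
       ( ((forall l, ~ prec M Cb Ca l kappa) /\
          M' = MkTA (Pab M) (Pag M) (Pbg M :\ (tau, kappa)))
       \/ (exists l, prec M Cb Ca l kappa /\
          M' = MkTA (Pab M) (Pag M :\ (tau, l)) (Pbg M :\ (tau, kappa)))))).

(* Main.v *)
Require Import Defs.
From mathcomp Require Import all_boot.
Set Implicit Arguments. Unset Strict Implicit.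

Definition subTA N (M' M : TA N) :=
  Pab M' \subset Pab M /\ Pag M' \subset Pag M /\ Pbg M' \subset Pbg M.

Lemma sub_prec N (M' M : TA N) (u v : corner) (i j : 'I_N) :
  subTA M' M -> prec M' u v i j -> prec M u v i j.
Proof.
move=> [h1 [h2 h3]]; case: u; case: v => //= H;
  by [apply: (subsetP h1) | apply: (subsetP h2) | apply: (subsetP h3)].
Qed.

Definition gathering N (M : TA N) := forall a b c,
     (prec M Ca Cc a c -> prec M Cb Cc a b -> prec M Ca Cb b c) /\
     (prec M Ca Cc a c -> prec M Ca Cb b c -> prec M Cb Cc a b) /\
     (prec M Cb Cc a b -> prec M Ca Cb b c -> prec M Ca Cc a c).

Lemma transfer N (al be ga : label N) (M M' : TA N) :
  gasket M al be ga -> gamma_isolated M al be ga -> subTA M' M ->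
  gathering M' -> gasket M' al be ga /\ gamma_isolated M' al be ga.
Proof.
move=> [[wf1 wf2] [U [G [B1 [B2 B3]]]]] [a [b [g [ea [eb [eg [nc [[i1 i2] [[i3 i4] [i5 i6]]]]]]]]]] S GM.
have P := sub_prec S.
split.
  split; first split.
    by move=> u v i /P; apply: wf1.
    by move=> u v u' v' i j /P h1 /P h2; apply: wf2 h1 h2.
  split; first by move=> u v i j j' /P h1 /P h2; apply: U h1 h2.
  split; first exact: GM.
  split; first by move=> x /B1 [h1 h2]; split => y /P; [apply: h1|apply: h2].
  split; first by move=> x /B2 [h1 h2]; split => y /P; [apply: h1|apply: h2].
  by move=> x /B3 [h1 h2]; split => y /P; [apply: h1|apply: h2].
exists a, b, g; do 3 (split; first by []).
split.
  move=> [x [p [pn [pp pl]]]]; apply: nc; exists x, p; split => //; split => //.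
  move: S => [_ [s2 s3]].
  apply: (sub_path _ pp) => y z /orP [h|h]; apply/orP; [left; exact: (subsetP s2)| right; exact: (subsetP s3)].
by do !split; move=> y /P; [apply: i1|apply: i2|apply: i3|apply: i4|apply: i5|apply: i6].
Qed.

Theorem lemma5p3 (N : nat) (al be ga : label N) (M M' : TA N) :
  al != be -> al != ga -> be != ga ->
  gasket M al be ga ->
  gamma_isolated M al be ga ->
  Pag M :|: Pbg M != set0 ->
  one_step_simplification M M' ->
  gasket M' al be ga /\ gamma_isolated M' al be ga.
Proof.
move=> _ _ _ GK GI _ [tau [kappa [_ H]]].
have GK' := GK.
move: GK' => [_ [U [G _]]].
apply: transfer GK GI _ _.
- case: H => [[_ [[_ ->]|[l [_ ->]]]]|[_ [[_ ->]|[l [_ ->]]]]];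
  by rewrite /subTA /= ?subsetDl ?subxx.
- case: H => [[_ [[nl ->]|[l [hl ->]]]]|[_ [[nl ->]|[l [hl ->]]]]] a b c /=;
  rewrite ?in_setD1 ?xpair_eqE.
  + split; first by move=> /andP [_ h1] h2; case: (G a b c) => [X _]; apply: X.
    split; first by move=> /andP [_ h1] h2; case: (G a b c) => [_ [X _]]; apply: X.
    move=> h1 h2; case: (G a b c) => [_ [_ X]]; have /= -> := X h1 h2; rewrite andbT.
    apply/negP => /andP [_ /eqP ec]; subst c; exact: (nl b h2).
  + split; first by move=> /andP [_ h1] /andP [_ h2]; case: (G a b c) => [X _]; apply: X.
    split.
      move=> /andP [n1 h1] h2; case: (G a b c) => [_ [X _]]; have /= -> := X h1 h2; rewrite andbT.
      apply/negP => /andP [/eqP ea /eqP eb]; subst a b.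
      have ec : c = kappa by apply: (U Ca Cb l).
      by subst c; rewrite !eqxx in n1.
    move=> /andP [n1 h1] h2; case: (G a b c) => [_ [_ X]]; have /= -> := X h1 h2; rewrite andbT.
    apply/negP => /andP [/eqP ea /eqP ec]; subst a c.
    have eb : b = l by apply: (U Cb Ca kappa).
    by subst b; rewrite !eqxx in n1.
  + split; first by move=> h1 /andP [_ h2]; case: (G a b c) => [X _]; apply: X.
    split.
      move=> h1 h2; case: (G a b c) => [_ [X _]]; have /= -> := X h1 h2; rewrite andbT.
      apply/negP => /andP [_ /eqP eb]; subst b; exact: (nl c h2).
    by move=> /andP [_ h1] h2; case: (G a b c) => [_ [_ X]]; apply: X.
  + split; first by move=> /andP [_ h1] /andP [_ h2]; case: (G a b c) => [X _]; apply: X.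
    split.
      move=> /andP [n1 h1] h2; case: (G a b c) => [_ [X _]]; have /= -> := X h1 h2; rewrite andbT.
      apply/negP => /andP [/eqP ea /eqP eb]; subst a b.
      have ec : c = l by apply: (U Ca Cb kappa).
      by subst c; rewrite !eqxx in n1.
    move=> /andP [n1 h1] h2; case: (G a b c) => [_ [_ X]]; have /= -> := X h1 h2; rewrite andbT.
    apply/negP => /andP [/eqP ea /eqP ec]; subst a c.
    have eb : b = kappa by apply: (U Cb Ca l).
    by subst b; rewrite !eqxx in n1.
Qed.
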